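(* There is an absolute constant $c>0$ such that for every sufficiently small $\varepsilon>0$ the following holds in the modified instance described in the context: there exists a clustering $\mathcal C^*_1$ of $V$ with cost at most $(1+c\varepsilon)\,\mathrm{opt}$ that does not split any atom of $\mathcal K$ and such that for every $u\in V$ and every $C\in\mathcal C^*_1$ with $K_u\subsetneq C$, we have $w(u,C)>\frac{|C|}{2}+\varepsilon\, w_u$.
   Context: A Correlation Clustering instance consists of a finite vertex set $V$ and a partition $E^+\uplus E^-=\binom V2$ of unordered pairs of distinct vertices into $+$edges and $-$edges; the cost of a clustering (partition) is the number of $+$edges between different parts plus the number of $-$edges inside parts. Every vertex has a $+$ self-loop by convention, so the set $N^+_u$ of $+$neighbours contains $u$. Let $\mathcal C$ be a clustering with cost at most $3$ times optimum. The atoms: with $\beta=0.1$, for every non-singleton $C\in\mathcal C$ mark every $u\in C$ with $|N^+_u\triangle C|>\frac\beta2|C|$ ($\triangle$ = symmetric difference), and if at least $\frac{\beta|C|}3$ vertices of $C$ are marked, mark all of $C$; $\mathcal K$ is obtained from $\mathcal C$ by making every marked vertex a singleton. Modified instance: every pair of distinct vertices lying in a common atom is relabelled as a $+$edge; below, costs and $\mathrm{opt}$ (the minimum cost) refer to this modified instance. For $u\in V$, $K_u$ is the atom containing $u$ and $k_u=|K_u|$. For $u,v\in V$ (possibly equal), $w_{uv}=\frac1{k_uk_v}\sum_{u'\in K_u,v'\in K_v}\mathbf 1[u'v'\text{ is a }+\text{edge or }u'=v']$; for $V'\subseteq V$, $w(u,V')=\sum_{v\in V'}w_{uv}$, and $w_u=w(u,V)$.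 *)

(* Defs.v *)
From HB Require Import structures.
From mathcomp Require Import all_boot all_order all_algebra.
From Stdlib Require Rdefinitions.
From mathcomp Require Import Rstruct.
Notation R := Rdefinitions.R.
Local Open Scope ring_scope.
Set Implicit Arguments. Unset Strict Implicit. Unset Printing Implicit Defensive.
Import Order.TTheory GRing.Theory Num.Theory.

Section CC.
Variable V : finType.

Definition clustering (P : {set {set V}}) : bool := partition P [set: V].

(* Cost of clustering P for the instance whose +edges are the pairs {u,v}, u<>v, with plus u v
   (plus assumed symmetric).  We count ordered pairs (u,v), u<>v, that are "bad"
   (+edge across parts, or -edge inside a part) and halve, i.e. count unordered pairs. *)
Definition cc_cost (plus : rel V) (P : {set {set V}}) : nat :=
  #|[set p : V * V | (p.1 != p.2) &&
      (plus p.1 p.2 (+) (pblock P p.1 == pblock P p.2))]| %/ 2.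

(* Optimum cost: minimum over all clusterings (the default value [set setT] is itself a
   clustering whenever V is nonempty; if V is empty every cost is 0). *)
Definition cc_opt (plus : rel V) : nat :=
  \big[minn/cc_cost plus [set [set: V]]]_(Q : {set {set V}} | clustering Q) cc_cost plus Q.

Definition Nplus (plus : rel V) (u : V) : {set V} := [set v | (v == u) || plus u v].

Definition symdiff (A B : {set V}) : {set V} := (A :\: B) :|: (B :\: A).

Definition beta : R := 1 / 10.

Definition marked_ind (plus : rel V) (C : {set V}) (u : V) : bool :=
  (u \in C) && (beta / 2 * (#|C|%:R : R) < (#|symdiff (Nplus plus u) C|%:R : R)).

Definition fully_marked (plus : rel V) (C : {set V}) : bool :=
  beta * (#|C|%:R : R) / 3 <= (#|[set u in C | marked_ind plus C u]|%:R : R).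

Definition marked (plus : rel V) (P : {set {set V}}) : {set V} :=
  [set u | [exists C in P, (1 < #|C|)%N && (u \in C) &&
                            (marked_ind plus C u || fully_marked plus C)]].

Definition atoms (plus : rel V) (P : {set {set V}}) : {set {set V}} :=
  [set [set u] | u in marked plus P] :|:
  ([set C :\: marked plus P | C in P] :\ set0).

Definition mod_plus (plus : rel V) (K : {set {set V}}) : rel V :=
  fun u v => plus u v || [exists A in K, (u \in A) && (v \in A)].

Definition wuv (plusK : rel V) (K : {set {set V}}) (u v : V) : R :=
  ((#|pblock K u|%:R * #|pblock K v|%:R)^-1) *
  \sum_(u' in pblock K u) \sum_(v' in pblock K v)
      (if plusK u' v' || (u' == v') then 1 else 0).

Definition wset (plusK : rel V) (K : {set {set V}}) (u : V) (S : {set V}) : R :=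
  \sum_(v in S) wuv plusK K u v.

Definition wtot (plusK : rel V) (K : {set {set V}}) (u : V) : R :=
  wset plusK K u [set: V].

End CC.

(* Main.v *)
Require Import Defs.
From HB Require Import structures.
From mathcomp Require Import all_boot all_order all_algebra.
From Stdlib Require Rdefinitions.
From mathcomp Require Import Rstruct.
From mathcomp Require Import zify ring lra.
Import Order.TTheory GRing.Theory Num.Theory.
Set Implicit Arguments. Unset Strict Implicit. Unset Printing Implicit Defensive.
Ltac sh := match goal with |- ?g => idtac g end.
Ltac bsolve := intros; repeat match goal with H : is_true _ -> _ |- _ => specialize (H isT) end;
  try discriminate; try done.

Section Gen.
Variable V : finType.

Lemma fpart (f : V -> {set V}) :
  (forall x, x \in f x) -> (forall x y, y \in f x -> f y = f x) ->
  partition [set f x | x in V] [set: V] /\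
  forall x, pblock [set f x | x in V] x = f x.
Proof.
move=> H1 H2.
have tI : trivIset [set f x | x in V].
  apply/trivIsetP => A B /imsetP[a _ ->] /imsetP[b _ ->] neq.
  apply/pred0P => z /=; apply/negbTE/negP => /andP[za zb].
  by move: neq; rewrite -(H2 _ _ za) (H2 _ _ zb) eqxx.
have mem x : f x \in [set f x | x in V] by apply: imset_f.
split; last by move=> x; apply: def_pblock.
apply/and3P; split => //.
- apply/eqP/setP => x; rewrite inE; apply/bigcupP; exists (f x) => //.
- apply/negP => /imsetP[x _ E]; by move: (H1 x); rewrite -E inE.
Qed.

End Gen.


Section Gen.
Variable V : finType.
Variable p : rel V.
Hypothesis psym : symmetric p.

Definition bad (s : rel V) x y : bool := (x != y) && (p x y (+) s x y).
Definition cost2 (s : rel V) : nat := \sum_x \sum_y (bad s x y : nat).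
Definition sameP (P : {set {set V}}) x y := pblock P x == pblock P y.

Lemma card_pairs (f : V -> V -> bool) :
  #|[set pr : V * V | f pr.1 pr.2]| = \sum_x \sum_y (f x y : nat).
Proof.
rewrite -sum1dep_card pair_big /= big_mkcond /=.
by apply: eq_bigr => -[x y] _ /=; case: (f x y).
Qed.

Lemma even_sym (f : V -> V -> bool) : (forall x y, f x y = f y x) -> (forall x, f x x = false) ->
  \sum_x \sum_y (f x y : nat) = 2 * \sum_x \sum_y ((enum_rank x < enum_rank y)%N && f x y : nat).
Proof.
move=> fs fd.
have pw x y : (f x y : nat) = ((enum_rank x < enum_rank y)%N && f x y : nat)
                 + ((enum_rank y < enum_rank x)%N && f y x : nat).
  case: (ltngtP (enum_rank x) (enum_rank y)) => H /=.
  - by rewrite addn0.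
  - by rewrite fs.
  - by move/ord_inj/enum_rank_inj: H => ->; rewrite fd.
under eq_bigr do under eq_bigr do rewrite pw.
rewrite mul2n -addnn.
under eq_bigr do rewrite big_split /=.
rewrite big_split /=; congr (_ + _).
by rewrite exchange_big.
Qed.

Lemma cost2_even (s : rel V) : (forall x y, s x y = s y x) -> cost2 s = 2 * (cost2 s %/ 2).
Proof.
move=> ss; rewrite /cost2 (@even_sym (bad s)).
- by rewrite mulKn.
- by move=> x y; rewrite /bad eq_sym psym ss.
- by move=> x; rewrite /bad eqxx.
Qed.

Lemma cc_cost2 P : cc_cost p P = cost2 (sameP P) %/ 2.
Proof. by rewrite /cc_cost /cost2 -(card_pairs (fun x y => bad (sameP P) x y)). Qed.

Lemma cc_cost2' P : 2 * cc_cost p P = cost2 (sameP P).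
Proof.
rewrite cc_cost2 -cost2_even //.
by move=> x y; rewrite /sameP eq_sym.
Qed.

End Gen.


Section Gen.
Variable V : finType.

Definition lpart (T : eqType) (lab : V -> T) : {set {set V}} :=
  [set [set y | lab y == lab x] | x in V].

Lemma lpartP (T : eqType) (lab : V -> T) :
  partition (lpart lab) [set: V] /\ forall x y, sameP (lpart lab) x y = (lab x == lab y).
Proof.
have h1 x : x \in [set y | lab y == lab x] by rewrite inE.
have h2 x y : y \in [set y | lab y == lab x] -> [set z | lab z == lab y] = [set z | lab z == lab x].
  by rewrite inE => /eqP E; apply/setP => z; rewrite !inE E.
have [H1 H2] := @fpart V (fun x => [set y | lab y == lab x]) h1 h2.
split => // x y; rewrite /sameP !H2.
apply/eqP/eqP => [E|E]; last by apply/setP => z; rewrite !inE E.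
by move: (h1 y); rewrite -E inE => /eqP.
Qed.

Lemma sum2_le (F G : V -> V -> nat) : (forall x y, F x y <= G x y) ->
  \sum_x \sum_y F x y <= \sum_x \sum_y G x y.
Proof. by move=> H; apply: leq_sum => x _; apply: leq_sum => y _. Qed.

Lemma sum2_swap (F : V -> V -> nat) : \sum_x \sum_y F x y = \sum_x \sum_y F y x.
Proof. exact: exchange_big. Qed.

End Gen.


Section NoSplit.
Variable V : finType.
Variable p : rel V.
Hypothesis psym : symmetric p.
Variable K : {set {set V}}.
Hypothesis Kpart : partition K [set: V].
Hypothesis clique : forall x y, sameP K x y -> x != y -> p x y.
Hypothesis AP : forall x y, sameP K x y ->
  2 * #|[set z | (z \notin pblock K x) && (p x z != p y z)]| < #|pblock K x|.

Lemma sumb_card (f : pred V) : \sum_y (f y : nat) = #|[set y | f y]|.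
Proof. rewrite -sum1dep_card [RHS]big_mkcond /=; apply: eq_bigr => y _; by case: (f y). Qed.

Lemma sum_in (A : {set V}) (F : V -> nat) : \sum_x ((x \in A) * F x) = \sum_(x in A) F x.
Proof. rewrite [RHS]big_mkcond; apply: eq_bigr => x _; by case: (x \in A); rewrite ?mul1n ?mul0n. Qed.

Lemma Ktriv : trivIset K. Proof. by case/and3P: Kpart. Qed.
Lemma Kcov x : x \in pblock K x.
Proof. by rewrite mem_pblock; case/and3P: Kpart => /eqP -> _ _; rewrite inE. Qed.

Lemma nosplit Q : partition Q [set: V] ->
  (forall Q', partition Q' [set: V] -> cost2 p (sameP Q) <= cost2 p (sameP Q')) ->
  forall x y, sameP K x y -> sameP Q x y.
Proof.
move=> Qp Qopt x0 y0 sK0; apply/negPn/negP => nsQ0.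
set A := pblock K x0.
set sQ := sameP Q.
have sQsym x y : sQ x y = sQ y x by rewrite /sQ /sameP eq_sym.
have sQtr x y z : sQ x y -> sQ y z = sQ x z by rewrite /sQ /sameP => /eqP ->.
have sQrefl x : sQ x x by rewrite /sQ /sameP eqxx.
have Aeq x : x \in A -> pblock K x = A by move=> xA; apply: same_pblock Ktriv xA.
have inA x y : x \in A -> y \in A -> sameP K x y.
  by move=> xA yA; rewrite /sameP (Aeq _ xA) (Aeq _ yA).
have x0A : x0 \in A by apply: Kcov.
have y0A : y0 \in A by rewrite /A (eqP sK0) Kcov.
pose lab b z := if z \in A then pblock Q b else pblock Q z.
pose cost b := cost2 p (fun x y => lab b x == lab b y).
pose g x b := \sum_y ((y \notin A) && (p x y (+) sQ b y) : nat).
pose d x b := \sum_y ((y \notin A) && (p x y != p b y) : nat).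
pose G b := \sum_(x in A) g x b.
pose G0 := \sum_(x in A) g x x.
pose Rest := \sum_x \sum_y ((x \notin A) && (y \notin A) && bad p sQ x y : nat).
pose cut := \sum_(b in A) \sum_(x in A) (~~ sQ x b : nat).
have swapG (F : V -> V -> bool) : \sum_x \sum_y ((x \notin A) && (y \in A) && F x y : nat)
     = \sum_x \sum_y ((x \in A) && (y \notin A) && F y x : nat).
  rewrite sum2_swap; apply: eq_bigr => x _; apply: eq_bigr => y _; by case: (x \in A); case: (y \in A).
have sumG (F : V -> V -> bool) : \sum_x \sum_y ((x \in A) && (y \notin A) && F x y : nat)
     = \sum_(x in A) \sum_y ((y \notin A) && F x y : nat).
  rewrite -sum_in; apply: eq_bigr => x _; rewrite big_distrr /=; apply: eq_bigr => y _.
  by case: (x \in A); rewrite ?mul1n ?mul0n.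
have costE b : cost b = Rest + 2 * G b.
  rewrite /cost /cost2.
  have pw x y : (bad p (fun x y => lab b x == lab b y) x y : nat) =
     ((x \notin A) && (y \notin A) && bad p sQ x y : nat)
     + ((x \in A) && (y \notin A) && (p x y (+) sQ b y) : nat)
     + ((x \notin A) && (y \in A) && (p x y (+) sQ x b) : nat).
    rewrite /bad /lab; case xA: (x \in A); case yA: (y \in A) => //=.
    - rewrite eqxx addbT; case: eqP => //= /eqP nxy; by rewrite clique ?inA.
    - have -> : x != y by apply/eqP => E; move: xA; rewrite E yA.
      by rewrite addn0.
    - have -> : x != y by apply/eqP => E; move: xA; rewrite E yA.
      by [].
    - by rewrite !addn0.
  under eq_bigr do under eq_bigr do rewrite pw.
  rewrite -/Rest. under eq_bigr do rewrite big_split /=. rewrite big_split /=.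
  under eq_bigr do rewrite big_split /=. rewrite big_split /=.
  rewrite -addnA; congr (_ + _); rewrite swapG.
  have E : \sum_x \sum_y ((x \in A) && (y \notin A) && (p y x (+) sQ y b) : nat)
          = \sum_x \sum_y ((x \in A) && (y \notin A) && (p x y (+) sQ b y) : nat).
    by apply: eq_bigr => x _; apply: eq_bigr => y _; rewrite psym sQsym.
  by rewrite E sumG mul2n addnn.
have cost0 : cost2 p sQ = Rest + cut + 2 * G0.
  rewrite /cost2.
  have pw x y : (bad p sQ x y : nat) =
     ((x \notin A) && (y \notin A) && bad p sQ x y : nat)
     + ((x \in A) && (y \in A) && ~~ sQ x y : nat)
     + ((x \in A) && (y \notin A) && (p x y (+) sQ x y) : nat)
     + ((x \notin A) && (y \in A) && (p x y (+) sQ x y) : nat).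
    rewrite /bad; case xA: (x \in A); case yA: (y \in A) => //=.
    - case: (eqVneq x y) => [->|nxy] /=; first by rewrite sQrefl.
      by rewrite (clique (inA x y xA yA) nxy) /= add0n !addn0.
    - have -> : x != y by apply/eqP => E; move: xA; rewrite E yA.
      by rewrite /= ?add0n ?addn0.
    - have -> : x != y by apply/eqP => E; move: xA; rewrite E yA.
      by rewrite /= ?add0n ?addn0.
    - by rewrite !addn0.
  under eq_bigr do under eq_bigr do rewrite pw.
  rewrite -/Rest. do 3! (under eq_bigr do rewrite big_split /=; rewrite big_split /=).
  rewrite -!addnA; congr (_ + _); congr (_ + _).
    rewrite /cut -sum_in; apply: eq_bigr => x _; rewrite -sum_in big_distrr /=.
    apply: eq_bigr => y _; rewrite sQsym; by case: (x \in A); case: (y \in A); rewrite ?mul1n ?mul0n.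
  rewrite swapG.
  have E : \sum_x \sum_y ((x \in A) && (y \notin A) && (p y x (+) sQ y x) : nat)
          = \sum_x \sum_y ((x \in A) && (y \notin A) && (p x y (+) sQ x y) : nat).
    by apply: eq_bigr => x _; apply: eq_bigr => y _; rewrite psym sQsym.
  by rewrite E sumG mul2n addnn.
have gle x b : x \in A -> b \in A ->
    g x b <= (sQ x b) * g x x + (~~ sQ x b) * (g b b + d x b).
  move=> xA bA; case E: (sQ x b); rewrite ?mul1n ?mul0n ?addn0 ?add0n.
    rewrite leq_eqVlt; apply/orP; left; apply/eqP; apply: eq_bigr => y _.
    by rewrite (sQtr x b y E).
  rewrite /g /d -big_split /=; apply: leq_sum => y _.
  by case: (y \notin A); case: (p x y); case: (p b y); case: (sQ b y).
have Gle : \sum_(b in A) G b <= #|A| * G0 + \sum_(b in A) \sum_(x in A) (~~ sQ x b) * d x b.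
  apply: (@leq_trans (\sum_(b in A) \sum_(x in A) ((sQ x b) * g x x + (~~ sQ x b) * (g b b + d x b)))).
    by apply: leq_sum => b bA; apply: leq_sum => x xA; apply: gle.
  have E1 : \sum_(b in A) \sum_(x in A) (sQ x b) * g x x = \sum_(b in A) \sum_(x in A) (sQ x b) * g b b.
    rewrite exchange_big; apply: eq_bigr => b _; apply: eq_bigr => x _; by rewrite sQsym.
  have E2 : \sum_(b in A) \sum_(x in A) ((sQ x b) * g x x + (~~ sQ x b) * (g b b + d x b))
     = #|A| * G0 + \sum_(b in A) \sum_(x in A) (~~ sQ x b) * d x b.
    under eq_bigr do under eq_bigr do rewrite mulnDr addnA.
    under eq_bigr do rewrite big_split /=. rewrite big_split /=; congr (_ + _).
    under eq_bigr do rewrite big_split /=. rewrite big_split /= E1 -big_split /=.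
    rewrite /G0 big_distrr /=; apply: eq_bigr => b _; rewrite -big_split /=.
    rewrite -sum_nat_const; apply: eq_bigr => x _; by case: (sQ x b); rewrite ?mul1n ?mul0n ?addn0.
  by rewrite E2.
have cutpos : 0 < cut.
  have ns : ~~ sQ y0 x0 by rewrite sQsym; exact: nsQ0.
  rewrite /cut; rewrite (bigD1 x0) //= (bigD1 y0) //= ns; lia.
have dle b x : b \in A -> x \in A -> 2 * d x b < #|A|.
  move=> bA xA; have := AP (inA x b xA bA); rewrite (Aeq _ xA) /d sumb_card; done.
have Dle : 2 * (\sum_(b in A) \sum_(x in A) (~~ sQ x b) * d x b) <= (#|A| - 1) * cut.
  rewrite /cut !big_distrr /=; apply: leq_sum => b bA; rewrite !big_distrr /=.
  apply: leq_sum => x xA; have := dle b x bA xA; case: (~~ sQ x b) => /=; lia.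
have Sum : \sum_(b in A) cost b = #|A| * Rest + 2 * \sum_(b in A) G b.
  under eq_bigr do rewrite costE. by rewrite big_split /= sum_nat_const; congr (_ + _); rewrite big_distrr.
have Apos : 0 < #|A| by apply/card_gt0P; exists x0.
have lt : \sum_(b in A) cost b < #|A| * cost2 p sQ.
  rewrite Sum cost0; move: Gle Dle cutpos Apos.
  set GG := \sum_(b in A) G b. set DD := \sum_(b in A) \sum_(x in A) _.
  move=> h1 h2 h3 h4; nia.
case: (boolP [exists b in A, cost b < cost2 p sQ]).
  case/exists_inP => b bA hb.
  have [P1 P2] := lpartP (lab b).
  have := Qopt _ P1.
  have -> : cost2 p (sameP (lpart (lab b))) = cost b.
    by rewrite /cost /cost2; apply: eq_bigr => x _; apply: eq_bigr => y _; rewrite /bad P2.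
  by rewrite leqNgt hb.
rewrite negb_exists_in => /forall_inP H.
have : #|A| * cost2 p sQ <= \sum_(b in A) cost b.
  rewrite -sum_nat_const; apply: leq_sum => b bA; by rewrite leqNgt H.
by rewrite leqNgt lt.
Qed.

End NoSplit.


Section W.
Local Open Scope ring_scope.
Variable V : finType.
Variable p : rel V.
Variable K : {set {set V}}.
Hypothesis Kpart : partition K [set: V].

Definition ind x y := p x y || (x == y).

Lemma sK_mem x y : sameP K x y = (y \in pblock K x).
Proof. rewrite /sameP eq_pblock //; [exact: Ktriv | by case/and3P: Kpart => /eqP ->]. Qed.

Lemma memK_sym x y : (y \in pblock K x) = (x \in pblock K y).
Proof. by rewrite -sK_mem -sK_mem /sameP eq_sym. Qed.

Lemma kpos v : (#|pblock K v|%:R : R) != 0.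
Proof. rewrite pnatr_eq0 -lt0n; apply/card_gt0P; exists v; exact: Kcov. Qed.

Lemma avg (H : V -> R) (S : {set V}) : (forall v z, v \in S -> sameP K v z -> z \in S) ->
  \sum_(v in S) ((#|pblock K v|%:R)^-1 * \sum_(v' in pblock K v) H v') = \sum_(v' in S) H v'.
Proof.
move=> cS.
under eq_bigr do rewrite mulr_sumr.
rewrite (exchange_big_dep (fun v' => v' \in S)) /=; last first.
  by move=> v v' vS; rewrite -sK_mem; apply: cS.
apply: eq_bigr => v' v'S.
rewrite (eq_bigl (fun v => v \in pblock K v')); last first.
  move=> v /=; apply/idP/idP => [/andP[vS]|vin].
    by rewrite memK_sym.
  apply/andP; split; last by rewrite memK_sym.
  by apply: (cS v'); rewrite // sK_mem.
rewrite (eq_bigr (fun _ => (#|pblock K v'|%:R)^-1 * H v')); last first.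
  move=> v; rewrite -sK_mem => /eqP ->; done.
by rewrite sumr_const -(mulr_natr ((#|pblock K v'|%:R)^-1 * H v')) mulrAC mulVf ?mul1r // kpos.
Qed.

Lemma wsetE u (S : {set V}) : (forall v z, v \in S -> sameP K v z -> z \in S) ->
  wset p K u S * #|pblock K u|%:R =
  (\sum_(x in pblock K u) \sum_(y in S) (ind x y : nat))%:R.
Proof.
move=> cS; rewrite /wset /wuv mulr_suml.
rewrite (eq_bigr (fun v => (#|pblock K v|%:R)^-1 * \sum_(v' in pblock K v)
            \sum_(u' in pblock K u) (if p u' v' || (u' == v') then 1 else 0 : R))); last first.
  move=> v _; rewrite [in RHS]exchange_big /=.
  move: (kpos u) (kpos v); set a := (#|pblock K u|%:R : R); set b := (#|pblock K v|%:R : R).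
  set X := \sum_(i in pblock K u) _; move=> ha hb; field.
  by rewrite ha hb.
rewrite avg // natr_sum exchange_big /=; apply: eq_bigr => y _.
rewrite natr_sum; apply: eq_bigr => x _; by rewrite /ind; case: (_ || _).
Qed.

End W.


Lemma bool_cost (a b q k pp e : bool) : (a -> k -> b) -> (b -> k -> a) -> (k -> q) ->
  (k -> ~~ e -> pp) -> (e -> k) ->
  ((~~ e && (pp (+) (if a then b && k else ~~ b && q)) : nat) + ((a || b) && q && ~~ (pp || e)) =
  (~~ e && (pp (+) q) : nat) + ((a || b) && q && ~~ k && (pp || e)))%N.
Proof. case: a; case: b; case: q; case: k; case: pp; case: e; bsolve. Qed.

Lemma bool_final (a b q pp e : bool) : (e -> q) ->
  (((a || b) && q && ~~ (pp || e) : nat) + (a && ~~ q && (pp || e)) <= (~~ e && (pp (+) q)))%N.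
Proof. case: a; case: b; case: q; case: pp; case: e; bsolve. Qed.

Lemma bool_d2 (a b xa ya xd yd q k i : bool) : (xa -> yd = ~~ b && q) -> (ya -> xd = ~~ a && q) ->
  ((((a || xa) || (b || ya)) && q && ~~ k && i : nat) <=
   ((a || b) && q && ~~ k && i : nat) + (xa && yd && i : nat) + (ya && xd && i : nat))%N.
Proof. case: a; case: b; case: xa; case: ya; case: xd; case: yd; case: q; case: k; case: i; bsolve. Qed.

Lemma bool_d3 (a b xa ya xd yd q i : bool) : (xa -> yd = ~~ b && q) -> (ya -> xd = ~~ a && q) ->
  (xa -> ~~ a) -> (ya -> ~~ b) -> (xa -> ya -> i) ->
  (((a || b) && q && ~~ i : nat) + (xa && yd && ~~ i : nat) + (ya && xd && ~~ i : nat) <=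
   (((a || xa) || (b || ya)) && q && ~~ i : nat))%N.
Proof. case: a; case: b; case: xa; case: ya; case: xd; case: yd; case: q; case: i; bsolve. Qed.

Lemma bool_d1 (a xa i : bool) : (xa -> ~~ a) ->
  (((a || xa) && i : nat) = (a && i : nat) + (xa && i : nat))%N.
Proof. case: a; case: xa; case: i; bsolve. Qed.

Lemma bool_e1 (b xa yd q i : bool) : (xa -> yd = ~~ b && q) ->
  ((xa && i : nat) = (xa && yd && i : nat) + (xa && b && q && i : nat) + (xa && ~~ q && i : nat))%N.
Proof. case: b; case: xa; case: yd; case: q; case: i; bsolve. Qed.

Lemma bool_e2 (a xa q i : bool) : (xa -> ~~ a) ->
  (((a || xa) && ~~ q && i : nat) = (a && ~~ q && i : nat) + (xa && ~~ q && i : nat))%N.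
Proof. case: a; case: xa; case: q; case: i; bsolve. Qed.

Lemma bool_e3 (a b xa ya yd q i : bool) : (xa -> yd = ~~ b && q) -> (ya -> ~~ b) -> (xa -> ~~ a) ->
  (((a || xa) && ~~ (b || ya) && q && i : nat) + (a && ya && q && i : nat) <=
   (a && ~~ b && q && i : nat) + (xa && yd && i : nat))%N.
Proof. case: a; case: b; case: xa; case: ya; case: yd; case: q; case: i; bsolve. Qed.

Section Proc.
Variable V : finType.
Variable p : rel V.
Hypothesis psym : symmetric p.
Variable K : {set {set V}}.
Hypothesis Kpart : partition K [set: V].
Hypothesis clique : forall x y, sameP K x y -> x != y -> p x y.
Variable Q : {set {set V}}.
Hypothesis Qpart : partition Q [set: V].
Hypothesis nsp : forall x y, sameP K x y -> sameP Q x y.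

Notation sQ := (sameP Q).
Notation sK := (sameP K).
Notation ind := (ind p).

Definition lab (R : {set V}) (x : V) : ({set V} + {set V})%type :=
  if x \in R then inl (pblock K x) else inr (pblock Q x).
Definition cls (R : {set V}) u := [set y | lab R y == lab R u].
Definition closed (R : {set V}) := forall x y, x \in R -> sK x y -> y \in R.

Definition SS (R : {set V}) := (\sum_x \sum_y ((x \in R) && ind x y : nat))%N.
Definition UU (R : {set V}) := (\sum_x \sum_y ((x \in R) && (y \notin R) && sQ x y && ind x y : nat))%N.
Definition Mo (R : {set V}) := (\sum_x \sum_y (((x \in R) || (y \in R)) && sQ x y && ~~ ind x y : nat))%N.
Definition Pc (R : {set V}) := (\sum_x \sum_y ((x \in R) && ~~ sQ x y && ind x y : nat))%N.
Definition Pin (R : {set V}) := (\sum_x \sum_y (((x \in R) || (y \in R)) && sQ x y && ~~ sK x y && ind x y : nat))%N.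

Lemma sQsym x y : sQ x y = sQ y x. Proof. by rewrite /sameP eq_sym. Qed.
Lemma sKsym x y : sK x y = sK y x. Proof. by rewrite /sameP eq_sym. Qed.
Lemma sKtr x y z : sK x y -> sK y z -> sK x z. Proof. by rewrite /sameP => /eqP ->. Qed.
Lemma sQtr x y z : sQ x y -> sQ y z -> sQ x z. Proof. by rewrite /sameP => /eqP ->. Qed.
Lemma indsym x y : ind x y = ind y x. Proof. by rewrite /ind psym eq_sym. Qed.

Lemma lab_eq R x y : (lab R x == lab R y) =
  if x \in R then (y \in R) && sK x y else (y \notin R) && sQ x y.
Proof. by rewrite /lab; case: (x \in R); case: (y \in R). Qed.

Lemma costD R : closed R ->
  (cost2 p (fun x y => lab R x == lab R y) + Mo R = cost2 p sQ + Pin R)%N.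
Proof.
move=> cR; rewrite /cost2 /Mo /Pin -!big_split /=; apply: eq_bigr => x _.
rewrite -!big_split /=; apply: eq_bigr => y _.
rewrite /bad lab_eq /ind; apply: bool_cost.
- by move=> xR; apply: cR.
- by move=> yR; rewrite sKsym; apply: cR.
- exact: nsp.
- by move=> k; apply: clique.
- by move/eqP ->; rewrite /sameP.
Qed.

Lemma final_bound R : (Mo R + Pc R <= cost2 p sQ)%N.
Proof.
rewrite /cost2 /Mo /Pc -!big_split /=; apply: leq_sum => x _.
rewrite -!big_split /=; apply: leq_sum => y _.
rewrite /bad /ind; apply: bool_final.
by move/eqP ->; rewrite /sameP.
Qed.

Lemma sum2_sym (f : V -> V -> bool) :
  (\sum_x \sum_y (f y x : nat) = \sum_x \sum_y (f x y : nat))%N.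
Proof. by rewrite sum2_swap. Qed.

Lemma sum_in2 (A S : {set V}) (f : V -> V -> bool) :
  (\sum_(x in A) \sum_(y in S) (f x y : nat) = \sum_x \sum_y ((x \in A) && (y \in S) && f x y : nat))%N.
Proof.
rewrite big_mkcond; apply: eq_bigr => x _; case: (x \in A) => /=; last by rewrite big1.
by rewrite big_mkcond; apply: eq_bigr => y _; case: (y \in S).
Qed.

Lemma card2 (A S : {set V}) :
  (\sum_x \sum_y ((x \in A) && (y \in S) : nat) = #|A| * #|S|)%N.
Proof.
have cS : (\sum_y ((y \in S) : nat) = #|S|)%N.
  by rewrite sumb_card; apply: eq_card => y; rewrite inE.
have cA : (\sum_x ((x \in A) : nat) = #|A|)%N.
  by rewrite sumb_card; apply: eq_card => y; rewrite inE.
rewrite -cS -cA big_distrl /=; apply: eq_bigr => x _; rewrite big_distrr /=.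
by apply: eq_bigr => y _; case: (x \in A); case: (y \in S).
Qed.

Local Open Scope ring_scope.
Variable eps : R.
Hypothesis eps_pos : 0 < eps.

Definition Inv (X : {set V}) := [/\ closed X,
  (Pin X)%:R <= (Mo X)%:R + 4 * eps * (SS X)%:R &
  (SS X)%:R + (UU X)%:R <= (Mo X)%:R + 4 * eps * (SS X)%:R + (Pc X)%:R].

Definition badb (X : {set V}) u :=
  [&& (u \notin X), (pblock K u \proper cls X u) &
   ~~ (#|cls X u|%:R / 2 + eps * wtot p K u < wset p K u (cls X u))].

Lemma step X u : Inv X -> badb X u -> Inv (X :|: pblock K u).
Proof.
case=> cX I1 I2 /and3P[uX prop nb].
set A := pblock K u. set D := cls X u.
have Aeq x : x \in A -> sK u x by rewrite sK_mem.
have F1 x : x \in A -> x \notin X.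
  move=> xA; apply/negP => xX; move: uX; rewrite (cX x u xX) //.
  by rewrite sKsym; apply: Aeq.
have F2 x : x \in A -> sQ x u by move=> xA; rewrite sQsym; apply: nsp; apply: Aeq.
have F3 x y : x \in A -> y \in A -> ind x y.
  move=> xA yA; rewrite /ind; case: (eqVneq x y) => [->|nxy]; first by rewrite orbT.
  rewrite clique //; apply: (@sKtr _ u); [rewrite sKsym|]; exact: Aeq.
have memD y : (y \in D) = (y \notin X) && sQ y u.
  by rewrite inE lab_eq; case: (y \in X); rewrite ?(negbTE uX) ?uX.
have F5 x y : x \in A -> (y \in D) = (y \notin X) && sQ x y.
  move=> xA; rewrite memD; congr (_ && _); apply/idP/idP => h.
    by apply: (sQtr (F2 _ xA)); rewrite sQsym.
  by apply: (sQtr _ (F2 _ xA)); rewrite sQsym.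
have cD v z : v \in D -> sK v z -> z \in D.
  rewrite !memD => /andP[vX vq] vz; apply/andP; split.
    by apply/negP => zX; move/negP: vX; apply; apply: (cX z) => //; rewrite sKsym.
  by apply: (sQtr _ vq); rewrite sQsym; apply: nsp.
have cX' : closed (X :|: A).
  move=> x y; rewrite !in_setU => /orP[xX|xA] xy; first by rewrite (cX x y).
  by apply/orP; right; rewrite /A -(sK_mem Kpart); apply: (sKtr (Aeq _ xA)).
have kA : (0 < #|A|)%N by apply/card_gt0P; exists u; exact: Kcov.
pose P := (\sum_x \sum_y ((x \in A) && (y \in D) && ind x y : nat))%N.
pose M := (\sum_x \sum_y ((x \in A) && (y \in D) && ~~ ind x y : nat))%N.
pose Xs := (\sum_x \sum_y ((x \in A) && ind x y : nat))%N.
have PM : (P + M = #|A| * #|D|)%N.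
  rewrite -card2 /P /M -big_split; apply: eq_bigr => x _.
  rewrite -big_split; apply: eq_bigr => y _.
  by case: (x \in A); case: (y \in D); case: (ind x y).
have wP : wset p K u D * #|A|%:R = P%:R.
  rewrite (wsetE p Kpart); first by rewrite sum_in2.
  by move=> v z vD vz; apply: cD vD vz.
have wX : wtot p K u * #|A|%:R = Xs%:R.
  rewrite /wtot (wsetE p Kpart) // sum_in2; congr (_%:R); apply: eq_bigr => x _; apply: eq_bigr => y _.
  by rewrite in_setT andbT.
have bad1 : P%:R <= M%:R + 2 * eps * Xs%:R.
  have h : wset p K u D <= #|D|%:R / 2 + eps * wtot p K u by rewrite leNgt.
  have kpos : (0 : R) < #|A|%:R by rewrite ltr0n.
  have := ler_wpM2r (ltW kpos) h.
  have -> : (#|D|%:R / 2 + eps * wtot p K u) * #|A|%:R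
      = (#|A|%:R * #|D|%:R) / 2 + eps * (wtot p K u * #|A|%:R) :> R by ring.
  rewrite wP wX -natrM -PM natrD => h2; lra.
have F5' x y : y \in A -> (x \in D) = (x \notin X) && sQ x y.
  by move=> yA; rewrite (F5 y x yA) sQsym.
pose Y := (\sum_x \sum_y ((x \in A) && (y \in X) && sQ x y && ind x y : nat))%N.
pose dPc := (\sum_x \sum_y ((x \in A) && ~~ sQ x y && ind x y : nat))%N.
have Psym : (\sum_x \sum_y ((y \in A) && (x \in D) && ind x y : nat) = P)%N.
  rewrite sum2_swap.
  by apply: eq_bigr => x _; apply: eq_bigr => y _; rewrite indsym.
have Msym : (\sum_x \sum_y ((y \in A) && (x \in D) && ~~ ind x y : nat) = M)%N.
  rewrite sum2_swap.
  by apply: eq_bigr => x _; apply: eq_bigr => y _; rewrite indsym.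
have Ysym : (\sum_x \sum_y ((x \in X) && (y \in A) && sQ x y && ind x y : nat) = Y)%N.
  rewrite sum2_swap.
  apply: eq_bigr => x _; apply: eq_bigr => y _; rewrite indsym sQsym.
  by case: (y \in X); case: (x \in A).
have d1 : (SS (X :|: A) = SS X + Xs)%N.
  rewrite /SS /Xs -big_split; apply: eq_bigr => x _; rewrite -big_split; apply: eq_bigr => y _.
  by rewrite in_setU; apply: bool_d1; apply: F1.
have d2 : (Pin (X :|: A) <= Pin X + P + P)%N.
  rewrite -{2}Psym /Pin /P -!big_split; apply: leq_sum => x _; rewrite -!big_split; apply: leq_sum => y _.
  by rewrite !in_setU; apply: bool_d2; [apply: F5 | apply: F5'].
have d3 : (Mo X + M + M <= Mo (X :|: A))%N.
  rewrite -{2}Msym /Mo /M -!big_split; apply: leq_sum => x _; rewrite -!big_split; apply: leq_sum => y _.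
  rewrite !in_setU; apply: bool_d3; [apply: F5 | apply: F5' | apply: F1 | apply: F1 | apply: F3].
have e1 : (Xs = P + Y + dPc)%N.
  rewrite /Xs /P /Y /dPc -!big_split; apply: eq_bigr => x _; rewrite -!big_split; apply: eq_bigr => y _.
  by apply: bool_e1; apply: F5.
have e2 : (Pc (X :|: A) = Pc X + dPc)%N.
  rewrite /Pc /dPc -!big_split; apply: eq_bigr => x _; rewrite -!big_split; apply: eq_bigr => y _.
  by rewrite in_setU; apply: bool_e2; apply: F1.
have e3 : (UU (X :|: A) + Y <= UU X + P)%N.
  rewrite -Ysym /UU /P -!big_split; apply: leq_sum => x _; rewrite -!big_split; apply: leq_sum => y _.
  by rewrite !in_setU; apply: bool_e3; [apply: F5 | apply: F1 | apply: F1].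
move/(congr1 (fun n => n%:R : R)): d1; rewrite natrD => d1'.
move/(congr1 (fun n => n%:R : R)): e1; rewrite !natrD => e1'.
move/(congr1 (fun n => n%:R : R)): e2; rewrite !natrD => e2'.
move: d2; rewrite -(ler_nat R) !natrD => d2'.
move: d3; rewrite -(ler_nat R) !natrD => d3'.
move: e3; rewrite -(ler_nat R) !natrD => e3'.
have X0 : (0 : R) <= Xs%:R by apply: ler0n.
split => //; rewrite d1'; nra.
Qed.

Lemma process n X : (#|~: X| <= n)%N -> Inv X -> exists X', Inv X' /\ forall u, ~~ badb X' u.
Proof.
elim: n X => [|n IH] X hn hI.
  exists X; split => // u; apply/negP => /and3P[uX _ _].
  by move: hn; rewrite leqn0 => /eqP/cards0_eq/setP/(_ u); rewrite !inE uX.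
case: (boolP [exists u, badb X u]); last first.
  by rewrite negb_exists => /forallP H; exists X.
case/existsP => u bu.
apply: (IH (X :|: pblock K u)); last exact: step.
have : (#|~: (X :|: pblock K u)| < #|~: X|)%N.
  apply: proper_card; rewrite properE; apply/andP; split.
    by apply/subsetP => y; rewrite !inE negb_or => /andP[].
  apply/subsetPn; exists u; first by case/and3P: bu => uX _ _; rewrite inE.
  by rewrite !inE (Kcov Kpart u) orbT.
move: hn; lia.
Qed.

Lemma proc_final : eps <= 1 / 8 -> exists C1 : {set {set V}},
  [/\ partition C1 [set: V],
      (cost2 p (sameP C1))%:R <= (1 + 8 * eps) * (cost2 p sQ)%:R,
      (forall A, A \in K -> exists2 B, B \in C1 & A \subset B) &
      (forall u (C : {set V}), C \in C1 -> pblock K u \proper C ->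
          #|C|%:R / 2 + eps * wtot p K u < wset p K u C)].
Proof.
move=> eps8.
have I0 : Inv set0.
  have z (f : V -> V -> bool) : (forall x y, f x y = false) -> (\sum_x \sum_y (f x y : nat) = 0)%N.
    by move=> H; rewrite big1 // => x _; rewrite big1 // => y _; rewrite H.
  rewrite /Inv /SS /UU /Mo /Pin /Pc !z // => *; rewrite ?inE //.
  by split; [move=> x y; rewrite inE | rewrite mulr0 addr0 | rewrite !mulr0 !addr0 ].
have [X [[cX I1 I2] nob]] := process (leqnn _) I0.
have [C1p C1s] := lpartP (lab X).
exists (lpart (lab X)); split => //.
- have cE : cost2 p (sameP (lpart (lab X))) = cost2 p (fun x y => lab X x == lab X y).
    by apply: eq_bigr => x _; apply: eq_bigr => y _; rewrite /bad C1s.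
  rewrite cE.
  have h1 := costD cX. have h2 := final_bound X.
  move/(congr1 (fun n => n%:R : R)): h1; rewrite !natrD => h1.
  move: h2; rewrite -(ler_nat R) !natrD => h2.
  have U0 : (0 : R) <= (UU X)%:R by apply: ler0n.
  have S0 : (0 : R) <= (SS X)%:R by apply: ler0n.
  have S2 : (SS X)%:R <= 2 * (cost2 p sQ)%:R :> R by nra.
  have E4 : 4 * eps * (SS X)%:R <= 4 * eps * (2 * (cost2 p sQ)%:R) :> R.
    have e0 : (0:R) <= 4 * eps by rewrite mulr_ge0 // ltW.
    by apply: ler_wpM2l.
  lra.
- move=> A AK.
  have [x xA] : exists x, x \in A.
    apply/set0Pn; apply/negP => /eqP A0; case/and3P: Kpart => _ _; rewrite -A0 AK.
    done.
  have Ax : A = pblock K x by rewrite (def_pblock (Ktriv Kpart) AK xA).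
  exists [set y | lab X y == lab X x]; first by apply: imset_f.
  apply/subsetP => y; rewrite Ax -(sK_mem Kpart) inE => xy.
  rewrite lab_eq; have yx : sK y x by rewrite sKsym.
  case yX: (y \in X); first by rewrite (cX y x yX yx) yx.
  have -> : (x \in X) = false.
    by apply/negP => xX; move: yX; rewrite (cX x y xX xy).
  by rewrite /= nsp.
- move=> u C /imsetP[x _ ->] prop.
  have ux : lab X u == lab X x.
    have := proper_sub prop; move/subsetP/(_ u (Kcov Kpart u)); by rewrite inE.
  have Ce : [set y | lab X y == lab X x] = cls X u.
    by apply/setP => y; rewrite !inE (eqP ux).
  rewrite Ce in prop *.
  case uX: (u \in X).
    have E : cls X u = pblock K u.
      apply/setP => y; rewrite inE lab_eq uX /=.
      case yX: (y \in X) => /=; first by rewrite -(sK_mem Kpart) sKsym.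
      apply/esym/negbTE/negP => yin; move: yX; rewrite (cX u y uX) //.
      by rewrite (sK_mem Kpart).
    by move: prop; rewrite E (negbTE (proper_irrefl _)).
  by have := nob u; rewrite /badb uX prop /= negbK.
Qed.

End Proc.


Section Opt.
Variable V : finType.
Variable p : rel V.

Lemma bigmin_le (r : seq {set {set V}}) (P : pred {set {set V}}) F x0 i :
  i \in r -> P i -> (\big[minn/x0]_(j <- r | P j) F j <= F i)%N.
Proof.
elim: r => // a r IH; rewrite inE big_cons => /orP[/eqP <- ->|ir Pi].
  by rewrite geq_minl.
case: (P a); last exact: IH.
by rewrite geq_min IH ?orbT.
Qed.

Lemma ccopt_eq Q : clustering Q -> (forall Q', clustering Q' -> (cc_cost p Q <= cc_cost p Q')%N) ->
  cc_opt p = cc_cost p Q.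
Proof.
move=> cQ Qmin; apply/eqP; rewrite eqn_leq; apply/andP; split.
  by apply: bigmin_le => //; rewrite mem_index_enum.
apply: (big_rec (fun n => cc_cost p Q <= n)%N); last first.
  by move=> i x Pi Hx; rewrite leq_min Hx Qmin.
case: (pickP (fun _ : V => true)) => [x _|none].
  apply: Qmin; apply/and3P; split.
  - by rewrite cover1.
  - by apply/trivIsetP => A B; rewrite !inE => /eqP -> /eqP ->; rewrite eqxx.
  - rewrite inE; apply/negP => /eqP/setP/(_ x); by rewrite !inE.
have -> : cc_cost p Q = 0%N.
  apply/eqP; rewrite -leqn0; apply: leq_trans (leq_div _ 2) _; rewrite leqn0 cards_eq0.
  apply/eqP/setP => pr; rewrite !inE; by have := none pr.1.
done.
Qed.

End Opt.

Section Atoms.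
Variable V : finType.
Variable plus : rel V.
Hypothesis psym : symmetric plus.
Variable Cl : {set {set V}}.
Hypothesis Clp : partition Cl [set: V].

Notation M := (marked plus Cl).
Definition fat (v : V) : {set V} := if v \in M then [set v] else pblock Cl v :\: M.

Lemma Cltriv : trivIset Cl. Proof. by case/and3P: Clp. Qed.
Lemma Clcov x : x \in pblock Cl x.
Proof. by rewrite mem_pblock; case/and3P: Clp => /eqP -> _ _; rewrite inE. Qed.
Lemma Clmem x : pblock Cl x \in Cl.
Proof. by apply: pblock_mem; case/and3P: Clp => /eqP -> _ _; rewrite inE. Qed.

Lemma fat1 x : x \in fat x.
Proof. by rewrite /fat; case: ifP => xM; rewrite ?in_set1 ?eqxx // in_setD xM Clcov. Qed.

Lemma fat2 x y : y \in fat x -> fat y = fat x.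
Proof.
rewrite /fat; case: ifP => xM; first by rewrite in_set1 => /eqP ->; rewrite xM.
rewrite in_setD => /andP[yM yC]; rewrite (negbTE yM).
by rewrite (same_pblock Cltriv yC).
Qed.

Lemma atomsE : atoms plus Cl = [set fat x | x in V].
Proof.
apply/setP => B; apply/idP/idP.
  rewrite /atoms in_setU in_setD1 => /orP[/imsetP[u uM ->]|/andP[B0 /imsetP[C CCl EB]]].
    2: subst B.
    by apply/imsetP; exists u => //; rewrite /fat uM.
  have [v vB] : exists v, v \in C :\: M by apply/set0Pn.
  apply/imsetP; exists v => //; rewrite /fat.
  move: vB; rewrite in_setD => /andP[vM vC]; rewrite (negbTE vM).
  by rewrite (def_pblock Cltriv CCl vC).
case/imsetP => x _ ->; rewrite /atoms /fat; case: ifP => xM; rewrite in_setU in_setD1.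
  by rewrite imset_f.
apply/orP; right; apply/andP; split.
  by apply/set0Pn; exists x; rewrite in_setD xM Clcov.
by apply: imset_f; apply: Clmem.
Qed.

Lemma Kpart : partition (atoms plus Cl) [set: V].
Proof. by rewrite atomsE; case: (fpart fat1 fat2). Qed.

Lemma pblockK x : pblock (atoms plus Cl) x = fat x.
Proof. by rewrite atomsE; case: (fpart fat1 fat2). Qed.

Notation K := (atoms plus Cl).
Notation pK := (mod_plus plus K).

Lemma pKsym : symmetric pK.
Proof.
move=> x y; rewrite /mod_plus psym; congr (_ || _).
by apply/existsP/existsP => -[A /andP[AK /andP[h1 h2]]]; exists A; rewrite AK h1 h2.
Qed.

Lemma pKclique x y : sameP K x y -> x != y -> pK x y.
Proof.
move=> sxy _; rewrite /mod_plus; apply/orP; right; apply/existsP; exists (pblock K x).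
apply/andP; split.
  by apply: pblock_mem; case/and3P: Kpart => /eqP -> _ _; rewrite inE.
by rewrite (Kcov Kpart) /= (eqP sxy) (Kcov Kpart).
Qed.

Lemma pK_out x z : z \notin pblock K x -> pK x z = plus x z.
Proof.
move=> zn; rewrite /mod_plus; case: (plus x z) => //=.
apply/negbTE; apply/existsP => -[A /andP[AK /andP[xA zA]]].
by move: zn; rewrite (def_pblock (Ktriv Kpart) AK xA) zA.
Qed.

Lemma notM x (C : {set V}) : x \notin M -> C \in Cl -> (1 < #|C|)%N -> x \in C ->
  ~~ marked_ind plus C x /\ ~~ fully_marked plus C.
Proof.
move=> xM CCl c1 xC; move: xM; rewrite inE negb_exists_in => /forall_inP/(_ C CCl).
by rewrite c1 xC /= negb_or => /andP.
Qed.

Local Open Scope ring_scope.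
Lemma arith (z a c cm m sx sy : R) : sx <= 1/10/2*c -> sy <= 1/10/2*c -> m < 1/10*c/3 ->
  z <= sx + sy -> cm <= m -> 2 <= c -> cm + a = c -> 2 * z < a.
Proof. move=> *; lra. Qed.

Lemma pKAP x y : sameP K x y ->
  (2 * #|[set z | (z \notin pblock K x) && (pK x z != pK y z)]| < #|pblock K x|)%N.
Proof.
rewrite /sameP !pblockK => /eqP fxy.
have apos : (0 < #|fat x|)%N by apply/card_gt0P; exists x; exact: fat1.
case: (eqVneq x y) => [<-|nxy].
  have -> : #|[set z | (z \notin fat x) && (pK x z != pK x z)]| = 0%N.
    by apply/eqP; rewrite cards_eq0; apply/eqP/setP => z; rewrite !inE eqxx andbF.
  by rewrite muln0.
have xM : x \notin M.
  apply/negP => xM; move: (fat1 y); rewrite -fxy /fat xM in_set1 => /eqP E.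
  by move: nxy; rewrite E eqxx.
have yM : y \notin M.
  apply/negP => yM; move: (fat1 x); rewrite fxy /fat yM in_set1 => /eqP E.
  by move: nxy; rewrite E eqxx.
set C := pblock Cl x.
have fx : fat x = C :\: M by rewrite /fat (negbTE xM).
have yC : y \in C by move: (fat1 y); rewrite -fxy fx in_setD => /andP[].
have xC : x \in C by apply: Clcov.
have CyE : pblock Cl y = C by apply: same_pblock Cltriv _; rewrite -/C.
have c1 : (1 < #|C|)%N by apply/card_gt1P; exists x, y.
have [mix fmC] := notM xM (Clmem x) c1 xC.
have [miy _] := notM yM (Clmem x) c1 yC.
set Z := [set z | (z \notin fat x) && (pK x z != pK y z)].
have hZ : Z \subset symdiff (Nplus plus x) C :|: symdiff (Nplus plus y) C.
  apply/subsetP => z; rewrite inE => /andP[zn].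
  have zx : z != x by apply/eqP => E; move: zn; rewrite E fat1.
  have zy : z != y by apply/eqP => E; move: zn; rewrite E fxy fat1.
  have e1 : pK x z = plus x z by apply: pK_out; rewrite pblockK.
  have e2 : pK y z = plus y z by apply: pK_out; rewrite pblockK -fxy zn.
  rewrite e1 e2.
  rewrite /symdiff !inE (negbTE zx) (negbTE zy) /=.
  by case: (plus x z); case: (plus y z); case: (z \in C).
have cZ : (#|Z| <= #|symdiff (Nplus plus x) C| + #|symdiff (Nplus plus y) C|)%N.
  apply: leq_trans (subset_leq_card hZ) _; rewrite cardsU; lia.
have cA := cardsID M C.
have cM : (#|C :&: M| <= #|[set u in C | marked_ind plus C u]|)%N.
  apply: subset_leq_card; apply/subsetP => u; rewrite in_setI => /andP[uC uM].
  move: uM; rewrite /marked in_set => /existsP[C0 /andP[C0Cl /andP[/andP[_ uC0] h]]].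
  have E : C0 = C by rewrite -(def_pblock Cltriv C0Cl uC0) (same_pblock Cltriv uC).
  move: h; rewrite E (negbTE fmC) orbF => h.
  by rewrite inE uC h.
move: mix miy fmC; rewrite /marked_ind /fully_marked xC yC /= -!real_leNgt ?real_ltNge ?num_real //.
rewrite /beta => h1 h2 h3; rewrite -fx in cA.
rewrite -(ltr_nat R) natrM.
move: cZ cM c1; rewrite -!(ler_nat R) ?natrD => cZ' cM' c1'.
move/(congr1 (fun n => n%:R : R)): cA; rewrite natrD => cA'.
rewrite -/C in h1 h2 h3; move: h3; rewrite -ltNge => h3.
exact: (arith h1 h2 h3 cZ' cM' c1' cA').
Qed.

End Atoms.


Local Open Scope ring_scope.

Theorem lemma9 :
  exists (c : R), 0 < c /\ exists (eps0 : R), 0 < eps0 /\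
  forall (eps : R), 0 < eps -> eps < eps0 ->
  forall (V : finType) (plus : rel V), symmetric plus ->
  forall (Cl : {set {set V}}), clustering Cl ->
  (cc_cost plus Cl <= 3 * cc_opt plus)%N ->
  let K := atoms plus Cl in
  let plusK := mod_plus plus K in
  exists C1 : {set {set V}},
    [/\ clustering C1,
        (cc_cost plusK C1)%:R <= (1 + c * eps) * (cc_opt plusK)%:R,
        (forall A, A \in K -> exists2 B, B \in C1 & A \subset B) &
        (forall (u : V) (C : {set V}), C \in C1 -> pblock K u \proper C ->
           (#|C|%:R / 2 + eps * wtot plusK K u < wset plusK K u C))].
Proof.
exists 8; split; first lra.
exists (1 / 8); split; first lra.
move=> eps e0 e1 V plus psym Cl Clp _.
cbv zeta.
have Kp := Kpart plus Clp.
have pKs := pKsym psym Cl.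
have clq := pKclique (plus:=plus) Clp.
have AP := pKAP (plus:=plus) Clp.
set K := atoms plus Cl in Kp pKs clq AP *.
set pK := mod_plus plus K in pKs clq AP *.
have P0 : partition (lpart (fun _ : V => tt)) [set: V] by case: (lpartP (fun _ : V => tt)).
case: (@arg_minnP _ _ (fun Q => partition Q [set: V]) (fun Q => cost2 pK (sameP Q)) P0) => Q Qp Qmin.
have nsp := nosplit pKs Kp clq AP Qp Qmin.
have [C1 [C1p Ccost C3 C4]] := proc_final pKs Kp clq Qp nsp e0 (ltW e1).
exists C1; split => //.
have opt : cc_opt pK = cc_cost pK Q.
  apply: ccopt_eq => // Q' Q'p.
  by rewrite -(leq_pmul2l (isT : (0 < 2)%N)) !cc_cost2' //; apply: Qmin.
rewrite opt.
have h1 := cc_cost2' pKs C1. have h2 := cc_cost2' pKs Q.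
move: Ccost; rewrite -h1 -h2 !natrM.
move: (ler0n R (cc_cost pK Q)) => hq.
move=> H; nra.
Qed.
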